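(* Assume $1/2\in\Phi$. (i) Let $L_1\oplus L_2$ be a $\mathbb{Z}$-graded Lie algebra over $\Phi$ (so $[L_1,L_1]\subseteq L_2$ and all other brackets vanish). Then $L_1\oplus L_2$, viewed inside $L_1\times L_2$ with bilinear map $\psi_L(a,c)=[a,c]/2$, is a vector group with operation $(a,b)(c,d) = (a+c,\, b+d+[a,c]/2)$. (ii) Every vector group $G\le A\times B$ over $\Phi$ is isomorphic, as a group (compatibly with both scalar multiplications and with the subgroups of second components), to the vector group $L$ associated by (i) to the graded Lie algebra $\mathrm{Lie}(G)$, via the map $(a,b)\mapsto(a,\, b-\psi(a,a)/2)$. (iii) This mapping induces, for every commutative associative unital $\Phi$-algebra $K$, a $\Phi$-group epimorphism $\hat L(K)\to\hat G(K)$. Hence condition (3) of the definition of vector group (surjectivity of $G_2\otimes_\Phi K\to\hat G(K)_2$) also holds when $1/2\in\Phi$.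
   Context: $\Phi$ is a commutative unital ring. Given $\Phi$-modules $A,B$ and a $\Phi$-bilinear $\psi : A\times A\to B$, make $A\times B$ a group via $(a,b)(c,d) = (a+c,\, b+d+\psi(a,c))$, with scalar multiplications $\lambda\cdot_1(a,b) = (\lambda a,\lambda^2 b)$ and, only on $0\times B$, $\lambda\cdot_2(0,b) = (0,\lambda b)$; the same formulas with $\psi$ extended $K$-bilinearly make sense on $(A\otimes K)\times(B\otimes K)$ for a commutative associative unital $\Phi$-algebra $K$, $\lambda\in K$. A subgroup $G\le A\times B$ is an almost vector group if it is closed under $\lambda\cdot_1$ ($\lambda\in\Phi$) and $G_2:=G\cap(0\times B)$ is closed under $\lambda\cdot_2$ ($\lambda\in\Phi$). $\hat G(K)$ is the smallest subgroup of $(A\otimes K)\times(B\otimes K)$ containing the images of all $g\in G$, closed under $\lambda\cdot_1$ ($\lambda\in K$), whose intersection $\hat G(K)_2$ with $0\times(B\otimes K)$ is closed under $\lambda\cdot_2$ ($\lambda\in K$). A vector group is an almost vector group such that, if $1/2\notin\Phi$, the natural map $G_2\otimes_\Phi K\to\hat G(K)_2$ is surjective for all $K$ (condition (3)); when $1/2\in\Phi$ every almost vector group is by definition a vector group. With $\Phi[\epsilon]$ the dual numbers and $\pi:\Phi[\epsilon]\to\Phi$ the projection, $\mathrm{Lie}(G) := \ker\hat G(\pi)=\{(\epsilon a,\epsilon b)\in\hat G(\Phi[\epsilon])\}$; as a module it is $\pi_A(G)\oplus G_2$ (first coordinates of elements of $G$, and $G_2$), graded with $\pi_A(G)$ in degree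 1 and $G_2$ in degree 2, and with bracket $[(a,b),(c,d)] = (0,\psi(a,c)-\psi(c,a))$. *)

(* Defs.v *)
From HB Require Import structures.
From mathcomp Require Import all_boot all_order all_algebra.
Set Implicit Arguments. Unset Strict Implicit. Unset Printing Implicit Defensive.
Import GRing.Theory.
Local Open Scope ring_scope.

Section VectorGroupOps.
Variables (R : pzRingType) (U V : lmodType R) (phi : U -> U -> V).

Definition is_bilin : Prop :=
  (forall (r : R) x y z, phi (r *: x + y) z = r *: phi x z + phi y z) /\
  (forall (r : R) x y z, phi z (r *: x + y) = r *: phi z x + phi z y).

Definition vmul (x y : U * V) : U * V := (x.1 + y.1, x.2 + y.2 + phi x.1 y.1).
Definition vinv (x : U * V) : U * V := (- x.1, - x.2 + phi x.1 x.1).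
Definition smul1 (l : R) (x : U * V) : U * V := (l *: x.1, (l * l) *: x.2).
(* lambda .2 (0,b) = (0, lambda b)  (only used on 0 x V) *)
Definition smul2 (l : R) (x : U * V) : U * V := (x.1, l *: x.2).

Definition is_subgroup (G : U * V -> Prop) : Prop :=
  G (0, 0) /\ (forall x y, G x -> G y -> G (vmul x y)) /\
  (forall x, G x -> G (vinv x)).

Definition almost_vg (G : U * V -> Prop) : Prop :=
  is_subgroup G /\ (forall l x, G x -> G (smul1 l x)) /\
  (forall l b, G (0, b) -> G (smul2 l (0, b))).
End VectorGroupOps.

Section BaseChange.
Variables (Phi : comPzRingType) (K : comAlgType Phi).

Definition klinear (M N : lmodType K) (g : M -> N) : Prop :=
  forall (k : K) x y, g (k *: x + y) = k *: g x + g y.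

(* [iota : U -> M] exhibits the K-module M as (P tensor_Phi K), where P is
   the Phi-submodule of U given by the predicate P, iota p = p (x) 1:
   iota is Phi-linear on P, and it is universal among Phi-linear maps from P
   to K-modules (existence and uniqueness of the K-linear factorization). *)
Definition tensor_on (U : lmodType Phi) (P : U -> Prop) (M : lmodType K)
    (iota : U -> M) : Prop :=
  (forall x y, P x -> P y -> iota (x + y) = iota x + iota y) /\
  (forall (r : Phi) x, P x -> iota (r *: x) = r%:A *: iota x) /\
  (forall (N : lmodType K) (f : U -> N),
     (forall x y, P x -> P y -> f (x + y) = f x + f y) ->
     (forall (r : Phi) x, P x -> f (r *: x) = r%:A *: f x) ->
     exists g : M -> N, klinear g /\ forall x, P x -> g (iota x) = f x) /\
  (forall (N : lmodType K) (g g' : M -> N), klinear g -> klinear g' ->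
     (forall x, P x -> g (iota x) = g' (iota x)) -> forall m, g m = g' m).

(* phiK : MU -> MU -> MV is the K-bilinear extension of phi (restricted to
   P x P) along iotaU, iotaV:  phiK (a (x) 1) (c (x) 1) = phi a c (x) 1. *)
Definition bilin_ext (U V : lmodType Phi) (P : U -> Prop) (phi : U -> U -> V)
    (MU MV : lmodType K) (iotaU : U -> MU) (iotaV : V -> MV)
    (phiK : MU -> MU -> MV) : Prop :=
  is_bilin phiK /\
  forall a c, P a -> P c -> phiK (iotaU a) (iotaU c) = iotaV (phi a c).

(* hat G (K): the smallest subgroup of (MU x MV, phiK) containing the images
   (g.1 (x) 1, g.2 (x) 1) of all g in G, closed under .1 (lambda in K),
   whose intersection with 0 x MV is closed under .2 (lambda in K). *)
Definition hatG (U V : lmodType Phi) (G : U * V -> Prop)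
    (MU MV : lmodType K) (iotaU : U -> MU) (iotaV : V -> MV)
    (phiK : MU -> MU -> MV) : MU * MV -> Prop :=
  fun z => forall H : MU * MV -> Prop, almost_vg phiK H ->
    (forall g, G g -> H (iotaU g.1, iotaV g.2)) -> H z.

(* condition (3): the natural map G_2 (x)_Phi K -> hat G(K)_2 is surjective,
   i.e. every (0,y) in hat G(K) has y in the image sum_i k_i (b_i (x) 1),
   b_i in G_2. *)
Definition cond3 (U V : lmodType Phi) (G : U * V -> Prop)
    (MU MV : lmodType K) (iotaU : U -> MU) (iotaV : V -> MV)
    (phiK : MU -> MU -> MV) : Prop :=
  forall y : MV, hatG G iotaU iotaV phiK (0, y) ->
    exists s : seq (K * V), (forall p, p \in s -> G (0, p.2)) /\
      y = \sum_(p <- s) p.1 *: iotaV p.2.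
End BaseChange.

Definition vector_group (Phi : comPzRingType) (U V : lmodType Phi)
    (phi : U -> U -> V) (G : U * V -> Prop) : Prop :=
  almost_vg phi G /\
  (~ (exists h : Phi, 2%:R * h = 1) ->
   forall (K : comAlgType Phi) (MU MV : lmodType K) (iotaU : U -> MU)
     (iotaV : V -> MV) (phiK : MU -> MU -> MV),
     tensor_on (fun _ => True) iotaU -> tensor_on (fun _ => True) iotaV ->
     bilin_ext (fun _ => True) phi iotaU iotaV phiK ->
     cond3 G iotaU iotaV phiK).

(** * Lie(G) = pi_A(G) (+) G_2 with bracket [(a,b),(c,d)] = (0, psi(a,c)-psi(c,a)) *)
Section LieOfG.
Variables (Phi : comPzRingType) (A B : lmodType Phi) (psi : A -> A -> B)
  (G : A * B -> Prop).
Definition LieG1 (a : A) : Prop := exists b, G (a, b).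
Definition LieG2 (b : B) : Prop := G (0, b).
Definition LieG_br (a c : A) : B := psi a c - psi c a.
End LieOfG.

(* Main.v *)
Require Import Defs.
From HB Require Import structures.
From mathcomp Require Import all_boot all_order all_algebra.
From mathcomp Require Import ring.
Import GRing.Theory.
Local Open Scope ring_scope.
Set Implicit Arguments. Unset Strict Implicit.

Section Lin.
Variables (R : pzRingType) (M N : lmodType R).
Definition lin (g : M -> N) := forall k x y, g (k *: x + y) = k *: g x + g y.
Variable g : M -> N.
Hypothesis Hg : lin g.
Lemma linD x y : g (x + y) = g x + g y.
Proof. by have := Hg 1 x y; rewrite !scale1r. Qed.
Lemma lin0 : g 0 = 0.
Proof. have H := linD 0 0. rewrite addr0 in H. by apply/eqP; rewrite -(subrr (g 0)) {2}H addrK. Qed.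
Lemma linZ k x : g (k *: x) = k *: g x.
Proof. by rewrite -[k *: x]addr0 Hg lin0 addr0. Qed.
Lemma linN x : g (- x) = - g x.
Proof. by rewrite -scaleN1r linZ scaleN1r. Qed.
Lemma linB x y : g (x - y) = g x - g y.
Proof. by rewrite linD linN. Qed.
End Lin.

Lemma kl_lin (Phi : comPzRingType) (K : comAlgType Phi) (M N : lmodType K) (g : M -> N) :
  klinear g -> lin g.
Proof. by []. Qed.

Lemma lin_kl (Phi : comPzRingType) (K : comAlgType Phi) (M N : lmodType K) (g : M -> N) :
  lin g -> klinear g.
Proof. by []. Qed.

Section Bil.
Variables (R : pzRingType) (U V : lmodType R) (phi : U -> U -> V).
Hypothesis Hb : is_bilin phi.
Lemma bl z : lin (fun x => phi x z). Proof. by move=> k x y; apply Hb.1. Qed.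
Lemma br z : lin (phi z). Proof. by move=> k x y; apply Hb.2. Qed.
Lemma phiDl x y z : phi (x + y) z = phi x z + phi y z. Proof. exact: (linD (bl z)). Qed.
Lemma phiDr x y z : phi z (x + y) = phi z x + phi z y. Proof. exact: (linD (br z)). Qed.
Lemma phiZl k x z : phi (k *: x) z = k *: phi x z. Proof. exact: (linZ (bl z)). Qed.
Lemma phiZr k x z : phi z (k *: x) = k *: phi z x. Proof. exact: (linZ (br z)). Qed.
Lemma phiNl x z : phi (- x) z = - phi x z. Proof. exact: (linN (bl z)). Qed.
Lemma phiNr x z : phi z (- x) = - phi z x. Proof. exact: (linN (br z)). Qed.
Lemma phi0l z : phi 0 z = 0. Proof. exact: (lin0 (bl z)). Qed.
Lemma phi0r z : phi z 0 = 0. Proof. exact: (lin0 (br z)). Qed.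
End Bil.

Section LinC.
Variables (R : comPzRingType) (M N P : lmodType R).
Lemma lin_comp (f : N -> P) (g : M -> N) : lin f -> lin g -> lin (fun x => f (g x)).
Proof. by move=> Hf Hg k x y; rewrite Hg Hf. Qed.
Lemma lin_add (f g : M -> N) : lin f -> lin g -> lin (fun x => f x + g x).
Proof. by move=> Hf Hg k x y; rewrite Hf Hg scalerDr addrACA. Qed.
Lemma lin_opp (f : M -> N) : lin f -> lin (fun x => - f x).
Proof. by move=> Hf k x y; rewrite Hf opprD scalerN. Qed.
Lemma lin_sub (f g : M -> N) : lin f -> lin g -> lin (fun x => f x - g x).
Proof. by move=> Hf Hg; apply: lin_add => //; apply: lin_opp. Qed.
Lemma lin_scale c (f : M -> N) : lin f -> lin (fun x => c *: f x).
Proof. by move=> Hf k x y; rewrite Hf scalerDr !scalerA mulrC. Qed.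
Lemma lin_zero : lin (fun _ : M => (0 : N)).
Proof. by move=> k x y; rewrite scaler0 addr0. Qed.
End LinC.

Lemma half2 (Phi : comPzRingType) (h : Phi) : 2%:R * h = 1 -> h + h = 1.
Proof. by move=> Hh; rewrite -mulr2n -mulr_natl. Qed.

Lemma halfv (Phi : comPzRingType) (h : Phi) (V : lmodType Phi) (v : V) :
  2%:R * h = 1 -> h *: v + h *: v = v.
Proof. by move=> Hh; rewrite -scalerDl half2 // scale1r. Qed.

Section GS.
Variables (Phi : comPzRingType) (h : Phi) (Hh : 2%:R * h = 1) (A B : lmodType Phi)
  (psi : A -> A -> B) (Hb : is_bilin psi) (G : A * B -> Prop) (HG : almost_vg psi G).

Lemma G0 : G (0,0). Proof. by case: HG => [[]]. Qed.
Lemma Gmul x y : G x -> G y -> G (vmul psi x y). Proof. by case: HG => [[_ []]]; auto. Qed.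
Lemma Ginv x : G x -> G (vinv psi x). Proof. by case: HG => [[_ []]]; auto. Qed.
Lemma Gs1 l x : G x -> G (smul1 l x). Proof. by case: HG => [_ []]; auto. Qed.
Lemma Gs2 l b : G (0, b) -> G (0, l *: b). Proof. by case: HG => [_ []] _ H; apply: H. Qed.

Lemma G2D b d : G (0,b) -> G (0,d) -> G (0,b+d).
Proof. by move=> H1 H2; have := Gmul H1 H2; rewrite /vmul /= addr0 (phi0l Hb) addr0. Qed.
Lemma G2N b : G (0,b) -> G (0,-b).
Proof. by move=> H; have := Ginv H; rewrite /vinv /= oppr0 (phi0l Hb) addr0. Qed.
Lemma Gadd2 a b d : G (a,b) -> G (0,d) -> G (a, b+d).
Proof. by move=> H1 H2; have := Gmul H1 H2; rewrite /vmul /= addr0 (phi0r Hb) addr0. Qed.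

Lemma Gcomm a b c d : G (a,b) -> G (c,d) -> G (0, psi a c - psi c a).
Proof.
move=> H1 H2; have := Gmul (Gmul H1 H2) (Ginv (Gmul H2 H1)); rewrite /vmul /vinv /=.
rewrite (addrC c a) subrr (phiNr Hb) addrA addrK (addrC d b) opprD addrACA subrr add0r.
done.
Qed.

Lemma Gpart a b : G (a,b) -> G (0, b - h *: psi a a).
Proof.
move=> H; have := Gmul (Gs1 2%:R H) (Ginv (Gmul H H)).
rewrite /vmul /vinv /smul1 /= scaler_nat mulr2n subrr (phiNr Hb) addrA addrK.
rewrite -natrM scaler_nat /= !mulrS mulr0n addr0 opprD !addrA.
move/(Gs2 h).
by rewrite -[b + b + b + b]addrA addrK scalerBr scalerDr halfv.
Qed.

Lemma Gunpart a b' b : G (a,b') -> G (0,b) -> G (a, b + h *: psi a a).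
Proof.
move=> H1 H2; have := Gadd2 H1 (G2D (G2N (Gpart H1)) H2).
by rewrite opprB addrCA !addrA addrNK addrC.
Qed.
End GS.

Definition ev (V : zmodType) (vs : seq V) (p : {poly int}) : V :=
  \sum_(i < size vs) vs`_i *~ p`_i.
Arguments ev {V}.
Lemma evD (V : zmodType) (vs : seq V) p q : ev vs (p + q) = ev vs p + ev vs q.
Proof. by rewrite /ev -big_split; apply: eq_bigr => i _; rewrite coefD mulrzDr. Qed.
Lemma evN (V : zmodType) (vs : seq V) p : ev vs (- p) = - ev vs p.
Proof. by rewrite /ev -sumrN; apply: eq_bigr => i _; rewrite coefN mulrNz. Qed.
Lemma evX (V : zmodType) (vs : seq V) k : (k < size vs)%N -> ev vs 'X^k = vs`_k.
Proof.
move=> lt; rewrite /ev (bigD1 (Ordinal lt)) //= coefXn eqxx mulr1z big1 ?addr0 // => i ne.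
have nk : (i : nat) != k by apply: contra ne => /eqP e; apply/eqP/val_inj.
by rewrite coefXn (negbTE nk) mulr0z.
Qed.
Lemma ev0 (V : zmodType) (vs : seq V) : ev vs 0 = 0.
Proof. by rewrite /ev big1 // => i _; rewrite coef0 mulr0z. Qed.

Ltac zfold := repeat (rewrite -evD || rewrite -evN).

Lemma zI1 (V : zmodType) (b d P X Y C : V) :
  b + d + (X + X) - (P + X + (Y + C)) = b - P + (d - C) + (X - Y).
Proof.
pose vs := [:: b; d; P; X; Y; C].
rewrite -[b](@evX _ vs 0) // -[d](@evX _ vs 1) // -[P](@evX _ vs 2) //
  -[X](@evX _ vs 3) // -[Y](@evX _ vs 4) // -[C](@evX _ vs 5) //.
zfold. congr (ev _ _). ring.
Qed.

Lemma zI2 (V : zmodType) (e e' P X Y C : V) :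
  e + e' + (X - Y) + ((P + X) + (Y + C)) = e + P + (e' + C) + (X + X).
Proof.
pose vs := [:: e; e'; P; X; Y; C].
rewrite -[e](@evX _ vs 0) // -[e'](@evX _ vs 1) // -[P](@evX _ vs 2) //
  -[X](@evX _ vs 3) // -[Y](@evX _ vs 4) // -[C](@evX _ vs 5) //.
zfold. congr (ev _ _). ring.
Qed.

Lemma zI3 (V : zmodType) (e X : V) : - e + 0 + X = - (e + X) + (X + X).
Proof.
rewrite addr0; pose vs := [:: e; X].
rewrite -[e](@evX _ vs 0) // -[X](@evX _ vs 1) //.
zfold. congr (ev _ _). ring.
Qed.

Lemma zI5 (V : zmodType) (y P : V) : - y + (P + P) - P = - (y - P).
Proof.
pose vs := [:: y; P].
rewrite -[y](@evX _ vs 0) // -[P](@evX _ vs 1) //.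
zfold. congr (ev _ _). ring.
Qed.

Section Part2.
Variables (Phi : comPzRingType) (h : Phi) (Hh : 2%:R * h = 1) (A B : lmodType Phi)
  (psi : A -> A -> B) (Hb : is_bilin psi) (G : A * B -> Prop) (HG : almost_vg psi G).

Lemma part2 :
   let L := fun x : A * B => LieG1 G x.1 /\ LieG2 G x.2 in
   let psiL := fun a c : A => h *: LieG_br psi a c in
   let f := fun x : A * B => (x.1, x.2 - h *: psi x.1 x.1) in
   (vector_group psiL L /\
    (forall x, G x -> L (f x)) /\
    (forall y, L y -> exists x, G x /\ f x = y) /\
    (forall x y, f x = f y -> x = y) /\
    (forall x y, G x -> G y -> f (vmul psi x y) = vmul psiL (f x) (f y)) /\
    (forall (l : Phi) x, G x -> f (smul1 l x) = smul1 l (f x)) /\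
    (forall x, G x -> (x.1 = 0 <-> (f x).1 = 0)) /\
    (forall (l : Phi) b, G (0, b) -> f (smul2 l (0, b)) = smul2 l (f (0, b)))).
Proof.
cbv zeta.
split.
  split; last by move=> N; exfalso; apply: N; exists h.
  split.
    split; first by split; [exists 0; apply: (G0 HG) | apply: (G0 HG)].
    split.
    + move=> [a b] [c d] [[b1 H1] H2] [[d1 H3] H4]; split => /=.
        by exists (b1 + d1 + psi a c); exact: (Gmul HG H1 H3).
      rewrite /LieG2 /LieG_br.
      exact: (G2D Hb HG (G2D Hb HG H2 H4) (Gs2 HG h (Gcomm Hb HG H1 H3))).
    + move=> [a b] [[b1 H1] H2]; split => /=.
        by exists (- b1 + psi a a); exact: (Ginv HG H1).
      by rewrite /LieG2 /LieG_br subrr scaler0 addr0; exact: (G2N Hb HG H2).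
  split.
  - move=> l [a b] [[b1 H1] H2]; split => /=.
      by exists ((l * l) *: b1); exact: (Gs1 HG l H1).
    by rewrite /LieG2 -scalerA; do 2 apply: (Gs2 HG).
  - move=> l b [_ H2]; split => /=; first by exists 0; apply: (G0 HG).
    exact: (Gs2 HG).
split.
  move=> [a b] H; split => /=; first by exists b.
  exact: (Gpart Hh Hb HG H).
split.
  move=> [a b] [[b1 H1] H2]; exists (a, b + h *: psi a a); split.
    exact: (Gunpart Hh Hb HG H1 H2).
  by rewrite /= addrK.
split.
  move=> [a b] [c d] /= [E1]; rewrite E1 => /addIr ->; done.
split.
  move=> [a b] [c d] _ _; rewrite /vmul /= /LieG_br; congr pair.
  rewrite (phiDl Hb) !(phiDr Hb) scalerBr !scalerDr -{1}(halfv (psi a c) Hh).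
  exact: zI1.
split.
  move=> l [a b] _; rewrite /smul1 /=; congr pair.
  by rewrite (phiZl Hb) (phiZr Hb) scalerBr !scalerA (mulrC h).
split; first by move=> [a b] _.
move=> l b _; rewrite /smul2 /= !(phi0l Hb) !scaler0 !subr0 //.
Qed.
End Part2.

Section Hat.
Variables (Phi : comPzRingType) (K : comAlgType Phi) (U V : lmodType Phi)
  (G : U * V -> Prop) (MU MV : lmodType K) (iU : U -> MU) (iV : V -> MV)
  (phiK : MU -> MU -> MV).
Let hG := hatG G iU iV phiK.
Lemma hat_ind (P : MU * MV -> Prop) : almost_vg phiK P ->
  (forall g, G g -> P (iU g.1, iV g.2)) -> forall z, hG z -> P z.
Proof. by move=> H1 H2 z; apply. Qed.
Lemma hat0 : hG (0, 0). Proof. by move=> H [[]]. Qed.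
Lemma hatmul z w : hG z -> hG w -> hG (vmul phiK z w).
Proof. by move=> Hz Hw H HH Hg; case: (HH) => [[_ [Hm _]] _]; apply: Hm; [apply: Hz|apply: Hw]. Qed.
Lemma hatinv z : hG z -> hG (vinv phiK z).
Proof. by move=> Hz H HH Hg; case: (HH) => [[_ [_ Hi]] _]; apply: Hi; apply: Hz. Qed.
Lemma hats1 l z : hG z -> hG (smul1 l z).
Proof. by move=> Hz H HH Hg; case: (HH) => [_ [Hs _]]; apply: Hs; apply: Hz. Qed.
Lemma hats2 l b : hG (0, b) -> hG (0, l *: b).
Proof. by move=> Hz H HH Hg; case: (HH) => [_ [_ Hs]]; apply: (Hs l b); apply: Hz. Qed.
Lemma hatgen g : G g -> hG (iU g.1, iV g.2).
Proof. by move=> Gg H HH Hg; apply: Hg. Qed.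
End Hat.

Lemma biuniq (Phi : comPzRingType) (K : comAlgType Phi) (U : lmodType Phi) (P : U -> Prop)
  (M N : lmodType K) (i : U -> M) : tensor_on P i ->
  forall (f g : M -> M -> N),
  (forall x, lin (f x)) -> (forall y, lin (fun x => f x y)) ->
  (forall x, lin (g x)) -> (forall y, lin (fun x => g x y)) ->
  (forall a c, P a -> P c -> f (i a) (i c) = g (i a) (i c)) -> forall x y, f x y = g x y.
Proof.
move=> [_ [_ [_ U4]]] f g f1 f2 g1 g2 H x y.
have step a : P a -> forall y, f (i a) y = g (i a) y.
  move=> Pa; apply: (U4 _ (f (i a)) (g (i a))); [exact: f1 | exact: g1 | by move=> c Pc; apply: H].
apply: (U4 _ (fun x => f x y) (fun x => g x y)); [exact: f2 | exact: g2 | by move=> a Pa; apply: step].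
Qed.

Lemma hhalf (Phi : comPzRingType) (h : Phi) (K : comAlgType Phi) (M : lmodType K) (w : M) :
  2%:R * h = 1 -> (h%:A : K) *: w + (h%:A : K) *: w = w.
Proof. by move=> Hh; rewrite -scalerDl -scalerDl half2 // scale1r scale1r. Qed.

Section TensorLin.
Variables (Phi : comPzRingType) (K : comAlgType Phi) (U : lmodType Phi) (M : lmodType K)
  (i : U -> M) (T : tensor_on (fun _ => True) i).
Lemma tD x y : i (x + y) = i x + i y. Proof. by case: T => H _; apply: H. Qed.
Lemma tZ r x : i (r *: x) = r%:A *: i x. Proof. by case: T => _ [H _]; apply: H. Qed.
Lemma t0 : i 0 = 0.
Proof. have E := tD 0 0; rewrite addr0 in E; apply: (addrI (i 0)); by rewrite addr0 -E. Qed.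
Lemma tN x : i (- x) = - i x.
Proof. by apply/eqP; rewrite -subr_eq0 opprK -tD addNr t0. Qed.
Lemma tB x y : i (x - y) = i x - i y. Proof. by rewrite tD tN. Qed.
End TensorLin.

Section Part3.
Variables (Phi : comPzRingType) (h : Phi) (Hh : 2%:R * h = 1) (A B : lmodType Phi)
  (psi : A -> A -> B) (Hb : is_bilin psi) (G : A * B -> Prop) (HG : almost_vg psi G).
Variables (K : comAlgType Phi)
      (AK BK : lmodType K) (iA : A -> AK) (iB : B -> BK) (psiK : AK -> AK -> BK)
      (L1K L2K : lmodType K) (i1 : A -> L1K) (i2 : B -> L2K)
      (psiLK : L1K -> L1K -> L2K) (j1 : L1K -> AK) (j2 : L2K -> BK).
Hypotheses (TA : tensor_on (fun _ => True) iA) (TB : tensor_on (fun _ => True) iB)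
  (EK : bilin_ext (fun _ => True) psi iA iB psiK)
  (T1 : tensor_on (LieG1 G) i1) (T2 : tensor_on (LieG2 G) i2)
  (EL : bilin_ext (LieG1 G) (fun a c : A => h *: LieG_br psi a c) i1 i2 psiLK)
  (J1 : klinear j1) (J1i : forall a, LieG1 G a -> j1 (i1 a) = iA a)
  (J2 : klinear j2) (J2i : forall b, LieG2 G b -> j2 (i2 b) = iB b).

Let hA : K := h%:A.
Let BK1 : is_bilin psiK := EK.1.
Let BL1 : is_bilin psiLK := EL.1.
Let EKi a c : psiK (iA a) (iA c) = iB (psi a c) := EK.2 a c I I.

Lemma LieG2_br a c : LieG1 G a -> LieG1 G c -> LieG2 G (h *: LieG_br psi a c).
Proof. by move=> [b H1] [d H2]; apply: (Gs2 HG); apply: (Gcomm Hb HG H1 H2). Qed.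

Lemma star x y : j2 (psiLK x y) = hA *: (psiK (j1 x) (j1 y) - psiK (j1 y) (j1 x)).
Proof.
apply: (biuniq T1 (f := fun x y => j2 (psiLK x y))
   (g := fun x y => hA *: (psiK (j1 x) (j1 y) - psiK (j1 y) (j1 x)))).
- move=> z; exact: (lin_comp (kl_lin J2) (br BL1 z)).
- move=> z; exact: (lin_comp (kl_lin J2) (bl BL1 z)).
- move=> z; apply: lin_scale; apply: lin_sub.
    exact: (lin_comp (br BK1 (j1 z)) (kl_lin J1)).
  exact: (lin_comp (bl BK1 (j1 z)) (kl_lin J1)).
- move=> z; apply: lin_scale; apply: lin_sub.
    exact: (lin_comp (bl BK1 (j1 z)) (kl_lin J1)).
  exact: (lin_comp (br BK1 (j1 z)) (kl_lin J1)).
- move=> a c Ha Hc; rewrite EL.2 // J2i; last exact: LieG2_br.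
  by rewrite !J1i // !EKi /LieG_br (tZ TB) (tB TB).
Qed.

Definition F (z : L1K * L2K) : AK * BK :=
  (j1 z.1, j2 z.2 + hA *: psiK (j1 z.1) (j1 z.1)).

Lemma Fhom z w : F (vmul psiLK z w) = vmul psiK (F z) (F w).
Proof.
rewrite /F /vmul /=; congr pair; first exact: (linD J1).
rewrite !(linD J1) !(linD J2) star (phiDl BK1) !(phiDr BK1) scalerBr !scalerDr.
rewrite -[psiK (j1 z.1) (j1 w.1) in RHS](hhalf _ Hh).
exact: zI2.
Qed.

Lemma Finv z : F (vinv psiLK z) = vinv psiK (F z).
Proof.
rewrite /F /vinv /=; congr pair; first exact: (linN J1).
rewrite (linD J2) (linN J2) star subrr scaler0 (linN J1) (phiNl BK1) (phiNr BK1) opprK.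
rewrite -{3}[psiK (j1 z.1) (j1 z.1)](hhalf _ Hh).
exact: zI3.
Qed.

Lemma Fs1 k z : F (smul1 k z) = smul1 k (F z).
Proof.
rewrite /F /smul1 /=; congr pair; first exact: (linZ J1).
rewrite (linZ J1) (linZ J2) (phiZl BK1) (phiZr BK1) scalerDr !scalerA; congr (_ + _).
by congr (_ *: _); rewrite mulrC.
Qed.

Lemma F0 y : F (0, y) = (0, j2 y).
Proof. by rewrite /F /= (lin0 J1) (phi0l BK1) scaler0 addr0. Qed.

Lemma Fs2 k y : F (smul2 k (0, y)) = smul2 k (F (0, y)).
Proof. have -> : smul2 k (0, y) = (0, k *: y) by []. by rewrite !F0 /smul2 /= (linZ J2). Qed.

Let L := fun x : A * B => LieG1 G x.1 /\ LieG2 G x.2.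
Let hL := hatG L i1 i2 psiLK.
Let hG := hatG G iA iB psiK.

Lemma Fa z : hL z -> hG (F z).
Proof.
apply: (hat_ind (P := fun z => hG (F z))).
  split. split.
      by rewrite F0 (lin0 J2); apply: hat0.
    split.
      by move=> z1 w Hz Hw; rewrite Fhom; apply: hatmul.
    by move=> z1 Hz; rewrite Finv; apply: hatinv.
  split.
    by move=> l z1 Hz; rewrite Fs1; apply: hats1.
  move=> l b Hb'; rewrite Fs2; rewrite F0 in Hb' *; rewrite /smul2 /=.
  exact: hats2.
move=> [a b] [Ha Hb'] /=; rewrite /F /= (J1i Ha) (J2i Hb').
case: Ha => b1 Hab1; have Gx := Gunpart Hh Hb HG Hab1 Hb'.
rewrite /= EKi /hA -(tZ TB) -(tD TB).
by apply: (hatgen (g := (a, b + h *: psi a a))).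
Qed.

Lemma Fc y : hG y -> exists z, hL z /\ F z = y.
Proof.
apply: (hat_ind (P := fun y => exists z, hL z /\ F z = y)).
  split. split.
      by exists (0,0); split; [apply: hat0 | rewrite F0 (lin0 J2)].
    split.
      move=> _ _ [z [Hz <-]] [w [Hw <-]]; exists (vmul psiLK z w); split.
        by apply: hatmul. 
      exact: Fhom.
    move=> _ [z [Hz <-]]; exists (vinv psiLK z); split; first by apply: hatinv.
    exact: Finv.
  split.
    move=> l _ [z [Hz <-]]; exists (smul1 l z); split; first by apply: hats1.
    exact: Fs1.
  move=> l b [[z1 z2] [Hz Fz]].
  rewrite /F /= in Fz; case: Fz => E1 E2.
  rewrite E1 (phi0l BK1) scaler0 addr0 in E2; subst b.
  set c := z2 + ((-1) * (-1)) *: z2 + psiLK z1 ((-1) *: z1).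
  have Hc : hL (0, c).
    by have := hatmul Hz (hats1 (-1) Hz); rewrite /vmul /smul1 /= {1}scaleN1r subrr.
  exists (0, l *: (hA *: c)); split; first by do 2 apply: hats2.
  rewrite F0 /smul2 /=; congr pair.
  rewrite !(linZ J2) !(linD J2) star (linZ J1) E1 scaler0 (phi0l BK1) subrr scaler0 addr0.
  by rewrite mulrNN mulr1 scale1r scalerDr hhalf.
move=> [a b] Gab /=; exists (i1 a, i2 (b - h *: psi a a)); split.
  apply: (hatgen (g := (a, b - h *: psi a a))).
  by split; [exists b | exact: (Gpart Hh Hb HG Gab)].
rewrite /F /= J1i; last by exists b.
rewrite J2i; last exact: (Gpart Hh Hb HG Gab).
by rewrite EKi (tB TB) (tZ TB) subrK.
Qed.

End Part3.

Inductive spanK (R : pzRingType) (M : lmodType R) (Q : M -> Prop) : M -> Prop :=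
| sp0 : spanK Q 0
| spS k x y : Q x -> spanK Q y -> spanK Q (k *: x + y).

Section Span.
Variables (R : comPzRingType) (M : lmodType R) (Q : M -> Prop).
Lemma spD x y : spanK Q x -> spanK Q y -> spanK Q (x + y).
Proof.
elim=> [|k q y' Hq _ IH] Hy; first by rewrite add0r.
by rewrite -addrA; apply: spS => //; apply: IH.
Qed.
Lemma spZ c x : spanK Q x -> spanK Q (c *: x).
Proof.
elim=> [|k q y' Hq _ IH]; first by rewrite scaler0; apply: sp0.
by rewrite scalerDr scalerA; apply: spS.
Qed.
Lemma spN x : spanK Q x -> spanK Q (- x).
Proof. by move=> H; rewrite -scaleN1r; apply: spZ. Qed.
Lemma spQ x : Q x -> spanK Q x.
Proof. by move=> H; rewrite -[x]addr0 -[x]scale1r; apply: spS => //; apply: sp0. Qed.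
End Span.

Section Part4.
Variables (Phi : comPzRingType) (h : Phi) (Hh : 2%:R * h = 1) (A B : lmodType Phi)
  (psi : A -> A -> B) (Hb : is_bilin psi) (G : A * B -> Prop) (HG : almost_vg psi G).
Variables (K : comAlgType Phi) (AK BK : lmodType K) (iA : A -> AK) (iB : B -> BK)
      (psiK : AK -> AK -> BK).
Hypotheses (TA : tensor_on (fun _ => True) iA) (TB : tensor_on (fun _ => True) iB)
  (EK : bilin_ext (fun _ => True) psi iA iB psiK).

Let hA : K := h%:A.
Let BK1 : is_bilin psiK := EK.1.
Let EKi a c : psiK (iA a) (iA c) = iB (psi a c) := EK.2 a c I I.
Let Q1 x := exists a, LieG1 G a /\ x = iA a.
Let Q2 y := exists b, G (0, b) /\ y = iB b.

Lemma sp_br x x' : spanK Q1 x -> spanK Q1 x' -> spanK Q2 (psiK x x' - psiK x' x).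
Proof.
have gen q : Q1 q -> spanK Q1 x' -> spanK Q2 (psiK q x' - psiK x' q).
  move=> [a [[b Hab] ->]]; elim=> [|k q' y' [c [[d Hcd] ->]] _ IH].
    by rewrite (phi0l BK1) (phi0r BK1) subrr; apply: sp0.
  rewrite (phiDl BK1) (phiDr BK1) (phiZl BK1) (phiZr BK1) opprD addrACA -scalerBr.
  apply: spD => //; apply: spZ; apply: spQ; exists (psi a c - psi c a); split.
    exact: (Gcomm Hb HG Hab Hcd).
  by rewrite !EKi (tB TB).
move=> Hx Hx'; elim: Hx => [|k q y Hq _ IH].
  by rewrite (phi0l BK1) (phi0r BK1) subrr; apply: sp0.
rewrite (phiDl BK1) (phiDr BK1) (phiZl BK1) (phiZr BK1) opprD addrACA -scalerBr.
by apply: spD => //; apply: spZ; apply: gen.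
Qed.

Let H (z : AK * BK) := spanK Q1 z.1 /\ spanK Q2 (z.2 - hA *: psiK z.1 z.1).

Lemma H_avg : almost_vg psiK H.
Proof.
split. split.
    by split; [apply: sp0 | rewrite (phi0l BK1) scaler0 subrr; apply: sp0].
  split.
    move=> [x y] [x' y'] [H1 H2] [H3 H4]; split => /=; first exact: spD.
    rewrite (phiDl BK1) !(phiDr BK1) !scalerDr.
    rewrite -{1}[psiK x x'](hhalf _ Hh) zI1 -scalerBr.
    by apply: spD; [apply: spD | apply: spZ; apply: sp_br].
  move=> [x y] [H1 H2]; split => /=; first exact: spN.
  rewrite (phiNl BK1) (phiNr BK1) opprK -{1}[psiK x x](hhalf _ Hh) zI5.
  exact: spN.
split.
  move=> k [x y] [H1 H2]; split => /=; first exact: spZ.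
  rewrite (phiZl BK1) (phiZr BK1) !scalerA (mulrC hA) -(scalerA (k * k) hA) -scalerBr.
  exact: spZ.
move=> k y [_ H2]; split => /=; first exact: sp0.
move: H2; rewrite /= (phi0l BK1) !scaler0 !subr0; exact: spZ.
Qed.

Lemma part4 : cond3 G iA iB psiK.
Proof.
move=> y Hy.
have : H (0, y).
  apply: Hy; first exact: H_avg.
  move=> [a b] Gab; split => /=.
    by apply: spQ; exists a; split => //; exists b.
  rewrite EKi /hA -(tZ TB) -(tB TB); apply: spQ; exists (b - h *: psi a a); split => //.
  exact: (Gpart Hh Hb HG Gab).
case=> _ /=; rewrite (phi0l BK1) scaler0 subr0.
elim=> [|k x y' [b [Gb ->]] _ [s [Hs ->]]].
  by exists [::]; split => //; rewrite big_nil.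
exists ((k, b) :: s); split; last by rewrite big_cons.
by move=> p; rewrite inE => /orP [/eqP -> //|]; apply: Hs.
Qed.
End Part4.

Unset Implicit Arguments. Set Strict Implicit.

Theorem lemma1p11 (Phi : comPzRingType) (h : Phi) (Hh : 2%:R * h = 1) :
  (* (i) a Z-graded Lie algebra L1 (+) L2 (bracket [L1,L1] <= L2, all other
     brackets zero; Jacobi is then automatic) gives the vector group
     L1 x L2 with psi_L(a,c) = [a,c]/2 *)
  (forall (L1 L2 : lmodType Phi) (br : L1 -> L1 -> L2),
     is_bilin br -> (forall a, br a a = 0) ->
     vector_group (fun a c => h *: br a c) (fun _ : L1 * L2 => True)) /\
  (forall (A B : lmodType Phi) (psi : A -> A -> B), is_bilin psi ->
  (forall G : A * B -> Prop, vector_group psi G ->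
   (* L = Lie(G) = pi_A(G) (+) G_2 as a vector group, psiL = bracket / 2 *)
   let L := fun x : A * B => LieG1 G x.1 /\ LieG2 G x.2 in
   let psiL := fun a c : A => h *: LieG_br psi a c in
   let f := fun x : A * B => (x.1, x.2 - h *: psi x.1 x.1) in
   (* (ii) *)
   (vector_group psiL L /\
    (forall x, G x -> L (f x)) /\
    (forall y, L y -> exists x, G x /\ f x = y) /\
    (forall x y, f x = f y -> x = y) /\
    (forall x y, G x -> G y -> f (vmul psi x y) = vmul psiL (f x) (f y)) /\
    (forall (l : Phi) x, G x -> f (smul1 l x) = smul1 l (f x)) /\
    (forall x, G x -> (x.1 = 0 <-> (f x).1 = 0)) /\
    (forall (l : Phi) b, G (0, b) -> f (smul2 l (0, b)) = smul2 l (f (0, b)))) /\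
   (* (iii) the induced map hat L(K) -> hat G(K), (x,y) |-> (x, y + psiK(x,x)/2),
      is a Phi-group epimorphism *)
   (forall (K : comAlgType Phi)
      (AK BK : lmodType K) (iA : A -> AK) (iB : B -> BK) (psiK : AK -> AK -> BK)
      (L1K L2K : lmodType K) (i1 : A -> L1K) (i2 : B -> L2K)
      (psiLK : L1K -> L1K -> L2K) (j1 : L1K -> AK) (j2 : L2K -> BK),
      tensor_on (fun _ => True) iA -> tensor_on (fun _ => True) iB ->
      bilin_ext (fun _ => True) psi iA iB psiK ->
      tensor_on (LieG1 G) i1 -> tensor_on (LieG2 G) i2 ->
      bilin_ext (LieG1 G) psiL i1 i2 psiLK ->
      klinear j1 -> (forall a, LieG1 G a -> j1 (i1 a) = iA a) ->
      klinear j2 -> (forall b, LieG2 G b -> j2 (i2 b) = iB b) ->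
      let F := fun z : L1K * L2K =>
        (j1 z.1, j2 z.2 + h%:A *: psiK (j1 z.1) (j1 z.1)) in
      let hL := hatG L i1 i2 psiLK in
      let hG := hatG G iA iB psiK in
      (forall z, hL z -> hG (F z)) /\
      (forall z w, hL z -> hL w -> F (vmul psiLK z w) = vmul psiK (F z) (F w)) /\
      (forall y, hG y -> exists z, hL z /\ F z = y) /\
      (forall (l : Phi) z, hL z -> F (smul1 (l%:A : K) z) = smul1 (l%:A : K) (F z)) /\
      (forall (l : Phi) y, hL (0, y) ->
         (F (0, y)).1 = 0 /\ F (smul2 (l%:A : K) (0, y)) = smul2 (l%:A : K) (F (0, y))))) /\
   (* hence condition (3) also holds when 1/2 is in Phi *)
   (forall G : A * B -> Prop, almost_vg psi G ->
    forall (K : comAlgType Phi) (AK BK : lmodType K) (iA : A -> AK) (iB : B -> BK)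
      (psiK : AK -> AK -> BK),
      tensor_on (fun _ => True) iA -> tensor_on (fun _ => True) iB ->
      bilin_ext (fun _ => True) psi iA iB psiK ->
      cond3 G iA iB psiK)).
Proof.
split.
  move=> L1 L2 br0 _ _; split; last by move=> N; exfalso; apply: N; exists h.
  split; [split; [done | split; done] | split; done].
move=> A B psi Hb; split.
  move=> G [HG _]; cbv zeta; split; first exact: (part2 Hh Hb HG).
  move=> K AK BK iA iB psiK L1K L2K i1 i2 psiLK j1 j2 TA TB EK T1 T2 EL J1 J1i J2 J2i.
  split; [|split; [|split; [|split]]].
  - by move=> z Hz; eapply Fa; eassumption.
  - by move=> z w _ _; eapply Fhom; eassumption.
  - by move=> y Hy; eapply Fc; eassumption.
  - by move=> l z _; eapply Fs1; eassumption.
  - move=> l y _; split; first by rewrite /= (lin0 J1).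
    by eapply Fs2; eassumption.
move=> G HG K AK BK iA iB psiK TA TB EK; eapply part4; eassumption.
Qed.
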